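(* Let $k$ be an algebraically closed field and let $\mathcal{C}\subset\mathbb{P}^3$ be a quadric cone with vertex $v$. Fix an integer $d\ge 2$. Let $Y\in|\mathcal{O}_{\mathcal{C}}(d)|$ be an integral curve with only unibranch singularities and let $\phi:X\to Y$ be its normalization. Fix $q\in\mathcal{C}\setminus Y$ with $q\ne v$ and let $R_q$ be the line of $\mathcal{C}$ containing $q$. Then the linear projection from $q$ restricted to $Y$ is an injective morphism $Y\to\mathbb{P}^2$ (equivalently, its composition with $\phi$ is an injective morphism $X\to\mathbb{P}^2$) if and only if $R_q\cap Y$ consists of exactly one point.
   Context: $\mathcal{O}_{\mathcal{C}}(d)$ is the restriction of $\mathcal{O}_{\mathbb{P}^3}(d)$ to $\mathcal{C}$. *)

(* Defs.v *)
From HB Require Import structures.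
From mathcomp Require Import all_boot all_order all_algebra.
From mathcomp Require Import mpoly.
Set Implicit Arguments. Unset Strict Implicit. Unset Printing Implicit Defensive.
Import Order.TTheory GRing.Theory Num.Theory.
Local Open Scope ring_scope.

Section Defs.
Variable k : fieldType.

(* Points of P^3 are represented by nonzero column vectors of k^4. *)
Definition ev (p : {mpoly k[4]}) (y : 'cV[k]_4) : k := p.@[fun i => y i ord0].

Definition peq (y1 y2 : 'cV[k]_4) : Prop := exists c : k, c != 0 /\ y1 = c *: y2.

(* Linear forms l_i = sum_j A_ij X_j; the quadric cone C_A : l0 l1 = l2^2,
   i.e. the image of the standard cone x0 x1 = x2^2 under the projectivity A^-1. *)
Definition linform (A : 'M[k]_4) (i : 'I_4) : {mpoly k[4]} :=
  \sum_(j < 4) A i j *: 'X_j.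
Definition coneQ (A : 'M[k]_4) : {mpoly k[4]} :=
  linform A 0 * linform A 1 - linform A 2 ^+ 2.
Definition e3 : 'cV[k]_4 := \col_(i < 4) ((i == 3 :> nat)%:R).
Definition vertex (A : 'M[k]_4) : 'cV[k]_4 := invmx A *m e3.

Definition inI (Q F P : {mpoly k[4]}) : Prop :=
  exists a b : {mpoly k[4]}, P = a * Q + b * F.
Definition prime_ideal2 (Q F : {mpoly k[4]}) : Prop :=
  ~ inI Q F 1 /\ forall a b, inI Q F (a * b) -> inI Q F a \/ inI Q F b.

(* a pair (G,H) representing the element G/H of the function field of
   Y = V(Q,F): G, H homogeneous of the same degree, H not in the ideal *)
Definition frac (Q F G H : {mpoly k[4]}) : Prop :=
  exists n : nat, G \is n.-homog /\ H \is n.-homog /\ ~ inI Q F H.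

(* A normalized discrete valuation of the function field K(Y), trivial on k,
   given on representatives of nonzero elements. *)
Definition place (Q F : {mpoly k[4]}) (v : {mpoly k[4]} -> {mpoly k[4]} -> int) : Prop :=
  [/\ (forall G H G' H', frac Q F G H -> frac Q F G' H' -> ~ inI Q F G -> ~ inI Q F G' ->
          inI Q F (G * H' - G' * H) -> v G H = v G' H'),
      (forall G H G' H', frac Q F G H -> frac Q F G' H' -> ~ inI Q F G -> ~ inI Q F G' ->
          v (G * G') (H * H') = v G H + v G' H'),
      (forall G H G' H', frac Q F G H -> frac Q F G' H' -> ~ inI Q F G -> ~ inI Q F G' ->
          ~ inI Q F (G * H' + G' * H) ->
          Num.min (v G H) (v G' H') <= v (G * H' + G' * H) (H * H')),
      (forall c : k, c != 0 -> v c%:MP 1 = 0) &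
      (exists G H, [/\ frac Q F G H, ~ inI Q F G & v G H = 1])].

(* the valuation ring of v dominates the local ring O_{Y,y}:
   i.e. the point of the normalization given by v lies over y *)
Definition centered (Q F : {mpoly k[4]}) (v : {mpoly k[4]} -> {mpoly k[4]} -> int)
  (y : 'cV[k]_4) : Prop :=
  forall G H, frac Q F G H -> ev H y != 0 -> ~ inI Q F G ->
    0 <= v G H /\ (ev G y = 0 -> 0 < v G H).

Definition onY (Q F : {mpoly k[4]}) (y : 'cV[k]_4) : Prop :=
  y != 0 /\ ev Q y = 0 /\ ev F y = 0.

(* every point of Y is unibranch: at most one point of the normalization
   (= place of K(Y)/k) lies over it *)
Definition only_unibranch (Q F : {mpoly k[4]}) : Prop :=
  forall y, onY Q F y ->
  forall v1 v2, place Q F v1 -> place Q F v2 -> centered Q F v1 y -> centered Q F v2 y ->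
  forall G H, frac Q F G H -> ~ inI Q F G -> v1 G H = v2 G H.

(* y1 and y2 have the same image under the linear projection from q *)
Definition same_proj (q y1 y2 : 'cV[k]_4) : Prop :=
  exists c mu : k, c != 0 /\ y1 = c *: y2 + mu *: q.

Definition on_line (v q y : 'cV[k]_4) : Prop :=
  exists a b : k, y = a *: v + b *: q.

End Defs.

(* Main.v *)
Require Import Defs.
From HB Require Import structures.
From mathcomp Require Import all_boot all_order all_algebra.
From mathcomp Require Import mpoly.
From mathcomp Require Import ring zify.
Import GRing.Theory Num.Theory.
Local Open Scope ring_scope.

Section H.
Variable k : closedFieldType.
Implicit Types (A : 'M[k]_4) (y : 'cV[k]_4).

Lemma ev_lin A i y : ev (linform A i) y = (A *m y) i ord0.
Proof.
rewrite /ev /linform (big_morph _ (mevalD _) (meval0 _)) mxE.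
by apply: eq_bigr => j _; rewrite mevalZ mevalXU.
Qed.

Lemma evQ A y : ev (coneQ A) y =
  (A *m y) 0 ord0 * (A *m y) 1 ord0 - (A *m y) 2%:R ord0 ^+ 2.
Proof.
by rewrite /ev /coneQ mevalB mevalM expr2 mevalM -!/(ev _ _) !ev_lin.
Qed.

Lemma ev_scale (F : {mpoly k[4]}) d c y : F \is d.-homog ->
  ev F (c *: y) = c ^+ d * ev F y.
Proof.
move=> hF; rewrite /ev !mevalE big_distrr /=; apply: eq_big_seq => m hm.
rewrite mulrCA; congr (_ * _).
have hd : mdeg m = d by exact: (dhomog_mf hF hm).
rewrite -hd mdegE -prodrXr -big_split /=.
by apply: eq_bigr => i _; rewrite mxE exprMn.
Qed.

Lemma Zlin A y1 y2 c mu i : (A *m (c *: y1 + mu *: y2)) i ord0 =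
  c * (A *m y1) i ord0 + mu * (A *m y2) i ord0.
Proof. by rewrite mulmxDr -!scalemxAr !mxE. Qed.

Lemma Av A : A \in unitmx -> A *m vertex A = e3 k.
Proof. by move=> hA; rewrite /vertex mulmxA mulmxV ?mul1mx. Qed.

Lemma onvert A w : A \in unitmx ->
  (A *m w) 0 ord0 = 0 -> (A *m w) 1 ord0 = 0 -> (A *m w) 2%:R ord0 = 0 ->
  w = (A *m w) 3%:R ord0 *: vertex A.
Proof.
move=> hA h0 h1 h2; set s := (A *m w) 3%:R ord0.
have HAw : A *m w = s *: e3 k.
  apply/matrixP => i j; rewrite [RHS]mxE /e3 [in RHS]mxE (ord1 j) mulr_natr.
  case: i => [[|[|[|[|i]]]] hi] //=.
  - have -> : Ordinal hi = 0 :> 'I_4 by apply/val_inj.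
    by rewrite h0 mulr0n.
  - have -> : Ordinal hi = 1 :> 'I_4 by apply/val_inj.
    by rewrite h1 mulr0n.
  - have -> : Ordinal hi = 2%:R :> 'I_4 by apply/val_inj.
    by rewrite h2 mulr0n.
  - have -> : Ordinal hi = 3%:R :> 'I_4 by apply/val_inj.
    by rewrite mulr1n.
have hw : w = invmx A *m (A *m w) by rewrite mulmxA mulVmx ?mul1mx.
by rewrite {1}hw HAw /vertex -scalemxAr.
Qed.

Lemma topM (p r : {poly k}) n m : (size p <= n.+1)%N -> (size r <= m.+1)%N ->
  (size (p * r)%R <= (n + m).+1)%N /\ (p * r)`_(n + m) = p`_n * r`_m.
Proof.
move=> hp hr; split.
  apply: leq_trans (size_polyMleq _ _) _.
  by move: hp hr; case: (size p) => [|a]; case: (size r) => [|b] /=; lia.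
rewrite coefM (bigD1 (Ordinal (leq_addr m n.+1 : (n < (n + m).+1)%N))) //=.
rewrite addKn big1 ?addr0 // => [[j hj]] /= hjn.
have [ltjn | lenj] := ltnP j n.
  by rewrite [r`_ _]nth_default ?mulr0 //; apply: leq_trans hr _; lia.
rewrite [p`_ _]nth_default ?mul0r //; apply: leq_trans hp _.
have : j != n by apply: contra hjn => /eqP e; apply/eqP/val_inj.
by move: lenj; rewrite leq_eqVlt eq_sym => /orP[->//|].
Qed.

Lemma topX (p : {poly k}) n e : (size p <= n.+1)%N ->
  (size (p ^+ e)%R <= (n * e).+1)%N /\ (p ^+ e)`_(n * e) = p`_n ^+ e.
Proof.
move=> hp; elim: e => [|e [IH1 IH2]].
  by rewrite expr0 muln0 size_poly1 coefC.
rewrite exprS mulnS; have [h1 h2] := topM _ _ _ _ hp IH1.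
by rewrite h2 IH2 exprS.
Qed.

Lemma topP (I : Type) (r : seq I) (f : I -> {poly k}) (nn : I -> nat) :
  (forall i, size (f i) <= (nn i).+1)%N ->
  (size (\prod_(i <- r) f i)%R <= (\sum_(i <- r) nn i).+1)%N /\
  (\prod_(i <- r) f i)`_(\sum_(i <- r) nn i)%N = \prod_(i <- r) (f i)`_(nn i).
Proof.
move=> hf; elim: r => [|a r [IH1 IH2]].
  by rewrite !big_nil size_poly1 coefC.
rewrite !big_cons; have [h1 h2] := topM _ _ _ _ (hf a) IH1.
by rewrite h2 IH2.
Qed.

Lemma line_root (F : {mpoly k[4]}) d (v q : 'cV[k]_4) : F \is d.-homog ->
  (0 < d)%N -> ev F q != 0 -> exists t, ev F (v + t *: q) = 0.
Proof.
move=> hF hd hq.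
pose L (i : 'I_4) : {poly k} := (q i ord0)%:P * 'X + (v i ord0)%:P.
pose P := \sum_(m <- msupp F) F@_m *: \prod_(i < 4) L i ^+ m i.
have hL i : (size (L i) <= 1.+1)%N.
  rewrite /L size_MXaddC; case: ifP => // _; rewrite ltnS size_polyC; by case: (_ != 0).
have hL1 i : (L i)`_1 = q i ord0 by rewrite /L coefD coefMX coefC /= coefC addr0.
have hev t : P.[t] = ev F (v + t *: q).
  rewrite /ev mevalE horner_sum; apply: eq_bigr => m _.
  rewrite hornerZ horner_prod; congr (_ * _); apply: eq_bigr => i _.
  by rewrite horner_exp /L !hornerE !mxE addrC mulrC.
have hc : P`_d = ev F q.
  rewrite /ev mevalE coef_sum; apply: eq_big_seq => mm hm; rewrite coefZ; congr (_ * _).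
  have hd' : d = (\sum_(i < 4) (1 * mm i))%N.
    have <- : mdeg mm = d by exact: (dhomog_mf hF hm).
    by rewrite mdegE; apply: eq_bigr => i _; rewrite mul1n.
  rewrite hd'; have [_ ->] := topP _ (index_enum 'I_4) (fun i => L i ^+ mm i) (fun i => 1 * mm i)%N
     (fun i => (topX _ _ (mm i) (hL i)).1).
  by apply: eq_bigr => i _; rewrite (topX _ _ (mm i) (hL i)).2 hL1.
have hs : (d < size P)%N.
  rewrite ltnNge; apply/negP => h; move: hq; rewrite -hc nth_default //.
  by rewrite eqxx.
have /closed_rootP [t ht] : size P != 1%N by apply/eqP => h; rewrite h in hs; lia.
by exists t; rewrite -hev; apply/eqP.
Qed.

Lemma sq0 (x : k) : x ^+ 2 = 0 -> x = 0.
Proof. by move/eqP; rewrite expf_eq0 /= => /eqP. Qed.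

Lemma alg1 (c mu a0 a1 a2 b0 b1 b2 : k) : c != 0 -> mu != 0 ->
  a0 * a1 - a2 ^+ 2 = 0 -> b0 * b1 - b2 ^+ 2 = 0 ->
  (c * a0 + mu * b0) * (c * a1 + mu * b1) - (c * a2 + mu * b2) ^+ 2 = 0 ->
  [/\ a0 * b1 = a1 * b0, a0 * b2 = a2 * b0 & a1 * b2 = a2 * b1].
Proof.
move=> hc hmu hA hB hC.
set B := a0 * b1 + a1 * b0 - 2%:R * a2 * b2.
have hB0 : B = 0.
  have : c * mu * B = 0.
    have -> : c * mu * B = (c * a0 + mu * b0) * (c * a1 + mu * b1) - (c * a2 + mu * b2) ^+ 2
       - c ^+ 2 * (a0 * a1 - a2 ^+ 2) - mu ^+ 2 * (b0 * b1 - b2 ^+ 2) by rewrite /B; ring.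
    by rewrite hA hB hC !mulr0 !subr0.
  by move/eqP; rewrite !mulf_eq0 (negbTE hc) (negbTE hmu) /= => /eqP.
split; apply/eqP; rewrite -subr_eq0; apply/eqP/sq0.
- have -> : (a0 * b1 - a1 * b0) ^+ 2 = B * (a0 * b1 + a1 * b0 + 2%:R * a2 * b2)
     - 4%:R * ((a0 * a1 - a2 ^+ 2) * (b0 * b1 - b2 ^+ 2) + (a0 * a1 - a2 ^+ 2) * b2 ^+ 2
              + a2 ^+ 2 * (b0 * b1 - b2 ^+ 2)) by rewrite /B; ring.
  by rewrite hA hB0 hB !(mulr0, mul0r, addr0, subr0).
- have -> : (a0 * b2 - a2 * b0) ^+ 2 = a0 * b0 * B - a0 ^+ 2 * (b0 * b1 - b2 ^+ 2)
     - b0 ^+ 2 * (a0 * a1 - a2 ^+ 2) by rewrite /B; ring.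
  by rewrite hA hB0 hB !(mulr0, mul0r, addr0, subr0).
- have -> : (a1 * b2 - a2 * b1) ^+ 2 = a1 * b1 * B - a1 ^+ 2 * (b0 * b1 - b2 ^+ 2)
     - b1 ^+ 2 * (a0 * a1 - a2 ^+ 2) by rewrite /B; ring.
  by rewrite hA hB0 hB !(mulr0, mul0r, addr0, subr0).
Qed.

Lemma prop3 (a0 a1 a2 b0 b1 b2 : k) :
  a0 * b1 = a1 * b0 -> a0 * b2 = a2 * b0 -> a1 * b2 = a2 * b1 ->
  ~ [/\ b0 = 0, b1 = 0 & b2 = 0] ->
  exists l, [/\ a0 = l * b0, a1 = l * b1 & a2 = l * b2].
Proof.
move=> h01 h02 h12 hb.
have [z0|nz0] := eqVneq b0 0.
  have [z1|nz1] := eqVneq b1 0.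
    have [z2|nz2] := eqVneq b2 0; first by case: hb.
    exists (a2 / b2); split.
    - by apply: (mulIf nz2); rewrite h02 z0 !mulr0 mul0r.
    - by apply: (mulIf nz2); rewrite h12 z1 !mulr0 mul0r.
    - by rewrite mulfVK.
  exists (a1 / b1); split.
  - by apply: (mulIf nz1); rewrite h01 z0 !mulr0 mul0r.
  - by rewrite mulfVK.
  - by rewrite mulrAC h12 mulfK.
exists (a0 / b0); split.
- by rewrite mulfVK.
- by rewrite mulrAC h01 mulfK.
- by rewrite mulrAC h02 mulfK.
Qed.

Lemma Zv A i : A \in unitmx -> (A *m vertex A) i ord0 = (i == 3 :> nat)%:R.
Proof. by move=> hA; rewrite Av // /e3 mxE. Qed.
End H.

Theorem proposition4p5 (k : closedFieldType) (A : 'M[k]_4) (d : nat)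
    (F : {mpoly k[4]}) (q : 'cV[k]_4) :
  A \in unitmx ->
  (2 <= d)%N ->
  F \is d.-homog ->
  ~ (exists G : {mpoly k[4]}, F = G * coneQ A) ->
  prime_ideal2 (coneQ A) F ->
  only_unibranch (coneQ A) F ->
  q != 0 -> ev (coneQ A) q = 0 -> ev F q != 0 -> ~ peq q (vertex A) ->
  ((forall y1 y2, onY (coneQ A) F y1 -> onY (coneQ A) F y2 ->
      same_proj q y1 y2 -> peq y1 y2)
   <->
   (exists y0, [/\ onY (coneQ A) F y0, on_line (vertex A) q y0 &
      forall y, onY (coneQ A) F y -> on_line (vertex A) q y -> peq y y0])).
Proof.
move=> hA hd hF _ _ _ hq0 hQq hFq hqv.
have hb : ~ [/\ (A *m q) 0 ord0 = 0, (A *m q) 1 ord0 = 0 & (A *m q) 2%:R ord0 = 0].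
  case=> h0 h1 h2; have e := @onvert _ _ _ hA h0 h1 h2.
  have [z3|nz3] := eqVneq ((A *m q) 3%:R ord0) 0.
    by move: hq0; rewrite e z3 scale0r eqxx.
  by apply: hqv; exists ((A *m q) 3%:R ord0); split.
have hZv0 : (A *m (vertex A)) 0 ord0 = 0 by rewrite Zv.
have hZv1 : (A *m (vertex A)) 1 ord0 = 0 by rewrite Zv.
have hZv2 : (A *m (vertex A)) 2%:R ord0 = 0 by rewrite Zv.
have hZv3 : (A *m (vertex A)) 3%:R ord0 = 1 by rewrite Zv.
have hQ : (A *m q) 0 ord0 * (A *m q) 1 ord0 - (A *m q) 2%:R ord0 ^+ 2 = 0 by rewrite -evQ.
have online a b : ev (coneQ A) (a *: vertex A + b *: q) = 0.
  rewrite evQ !Zlin hZv0 hZv1 hZv2.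
  have -> : (a * 0 + b * (A *m q) 0 ord0) * (a * 0 + b * (A *m q) 1 ord0) - (a * 0 + b * (A *m q) 2%:R ord0) ^+ 2
     = b ^+ 2 * ((A *m q) 0 ord0 * (A *m q) 1 ord0 - (A *m q) 2%:R ord0 ^+ 2) by ring.
  by rewrite hQ mulr0.
split.
- move=> H.
  have [t ht] := @line_root _ F d (vertex A) q hF (leq_trans (isT : (0 < 2)%N) hd) hFq.
  have e0 : vertex A + t *: q = 1 *: vertex A + t *: q by rewrite scale1r.
  have hY0 : onY (coneQ A) F (vertex A + t *: q).
    split; last by split=> //; rewrite e0 online.
    apply/negP => /eqP y00.
    have hz i : (A *m (1 *: vertex A + t *: q)) i ord0 = 0 by rewrite -e0 y00 mulmx0 mxE.
    have [t0|nt0] := eqVneq t 0.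
      by move: (hz 3%:R); rewrite Zlin hZv3 t0 mul0r addr0 mulr1 => /eqP; rewrite oner_eq0.
    move: (hz 0) (hz 1) (hz 2%:R); rewrite !Zlin hZv0 hZv1 hZv2 !mulr0 !add0r.
    move=> /eqP h0 /eqP h1 /eqP h2; apply: hb; split; apply/eqP.
    + by move: h0; rewrite mulf_eq0 (negbTE nt0).
    + by move: h1; rewrite mulf_eq0 (negbTE nt0).
    + by move: h2; rewrite mulf_eq0 (negbTE nt0).
  exists (vertex A + t *: q); split => //.
  + by exists 1, t; rewrite scale1r.
  + move=> y hy [a [b ey]].
    have [a0|na0] := eqVneq a 0.
      exfalso; case: hy => hy0 [_ hFy].
      move: hFy; rewrite ey a0 scale0r add0r (@ev_scale _ _ _ _ _ hF) => /eqP.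
      rewrite mulf_eq0 (negbTE hFq) orbF expf_eq0 => /andP[_ /eqP b0].
      by move: hy0; rewrite ey a0 b0 !scale0r addr0 eqxx.
    apply: H => //.
    exists a, (b - a * t); split=> //.
    by rewrite ey; apply/matrixP => i j; rewrite !mxE; ring.
- move=> [y0 [hY0 hl0 huniq]] y1 y2 h1 h2 [c [mu [hc e]]].
  have [mu0|nmu] := eqVneq mu 0.
    by exists c; split => //; rewrite e mu0 scale0r addr0.
  have hQ2 := h2.2.1; rewrite evQ in hQ2.
  have hQ1 := h1.2.1; rewrite e evQ !Zlin in hQ1.
  have [m01 m02 m12] := @alg1 _ _ _ _ _ _ _ _ _ hc nmu hQ2 hQ hQ1.
  have [l [l0 l1 l2]] := @prop3 _ _ _ _ _ _ _ m01 m02 m12 hb.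
  set w := 1 *: y2 + (- l) *: q.
  have hw0 : (A *m w) 0 ord0 = 0 by rewrite /w Zlin l0; ring.
  have hw1 : (A *m w) 1 ord0 = 0 by rewrite /w Zlin l1; ring.
  have hw2 : (A *m w) 2%:R ord0 = 0 by rewrite /w Zlin l2; ring.
  have ew := @onvert _ A w hA hw0 hw1 hw2.
  move: ew; set s0 := (A *m w) 3%:R ord0 => ew.
  have ey2 : y2 = s0 *: vertex A + l *: q.
    by rewrite -ew /w; apply/matrixP => i j; rewrite !mxE; ring.
  have hl2 : on_line (vertex A) q y2 by exists s0, l.
  have hl1 : on_line (vertex A) q y1.
    exists (c * s0), (c * l + mu).
    by rewrite e {1}ey2; apply/matrixP => i j; rewrite !mxE; ring.
  have [c1 [hc1 e1]] := huniq y1 h1 hl1.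
  have [c2 [hc2 e2]] := huniq y2 h2 hl2.
  exists (c1 / c2); split; first by rewrite mulf_neq0 ?invr_eq0.
  by rewrite e1 e2 scalerA divfK.
Qed.
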